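(* In the two-tier residency matching game described in the context with $v\ge e/(e-1)$, consider the variant in which high-tier doctors submit lists of length $K\ge 1$ and low-tier doctors submit lists of length $1$. Under the large market approximation, the social welfare of the symmetric equilibrium of this variant is at least $\frac{e}{2(e-1)}$ times the social welfare of SIMPLE.
   Context: Model: there are $n$ high-tier and $rn$ low-tier doctors ($r>0$), and $n$ high-tier and $rn$ low-tier hospitals, each with one position. Every hospital prefers every high doctor to every low doctor and every doctor prefers every high hospital to every low hospital; within a tier, preferences are independent uniformly random permutations. Each doctor submits a ranked list of hospitals of the allowed length $L$: a strategy $(k,L-k)$ lists his $k$ most preferred high hospitals followed by his $L-k$ most preferred low hospitals. Hospitals submit full true rankings; doctor-proposing deferred acceptance is run. Values: a doctor gets $v>1$ if matched to a high hospital, $1$ if matched to a low one, $0$ if unmatched; a hospital gets $v$ from a high doctor, $1$ from a low doctor, $0$ if unfilled; social welfare is the sum of all agents' values. Large market approximation: $n\to\infty$ with $r,K,v$ fixed; each application is accepted independently with a probability determined by the aggregate strategy profile via fixed-point equations (expected matched doctors = expected hospitals receiving at least one admissible application; a hospital receiving on average $\lambda$ applications gets none with probability $e^{-\lambda}$; low doctors' applications to hospitals already taken by high doctors are rejected). Equilibrium: symmetric Nash equilibrium (all doctors of a tier use the same, possibly mixed, strategy, each maximizing expected value given the acceptance probabilities). SIMPLE: the outcome when every doctor submits a single application to his most preferred hospital in his own tier; its welfare is $2(v+r)n(1-1/e)$. *)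

(* Defs.v *)
From Stdlib Require Import Reals.
Open Scope R_scope.

(* Large-market model of the two-tier residency game, all quantities
   normalised per high-tier hospital (i.e. divided by n).

   High doctors (n of them) use a mixed strategy x : nat -> R, where x k is
   the probability of the list (k, K-k), k = 0..K.  Low doctors (r n of
   them) have lists of length 1 and use strategy (1,0) (apply to a high
   hospital) with probability y and (0,1) with probability 1-y. *)

(* phi lam = (1 - e^{-lam}) / lam, with phi 0 = 1 (its continuous limit):
   the acceptance probability of an application at a hospital receiving on
   average lam applications (= 1 - e^{-lam} filled hospitals per lam
   applications). *)
Definition phi (lam : R) : R :=
  if Req_EM_T lam 0 then 1 else (1 - exp (- lam)) / lam.

(* geom q m = sum_{j<m} q^j : expected number of applications actually
   made (proposals in DA) by a doctor going down m hospitals, each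
   rejection having probability q. *)
Fixpoint geom (q : R) (m : nat) : R :=
  match m with
  | O => 0
  | S m' => 1 + q * geom q m'
  end.

(* expected applications per high hospital from high doctors *)
Definition lamHH (K : nat) (x : nat -> R) (pHH : R) : R :=
  sum_f_R0 (fun k => x k * geom (1 - pHH) k) K.

(* expected applications per low hospital from high doctors *)
Definition lamHL (r : R) (K : nat) (x : nat -> R) (pHH pHL : R) : R :=
  / r * sum_f_R0 (fun k => x k * (1 - pHH) ^ k * geom (1 - pHL) (K - k)) K.

(* Fixed-point equations of the large market approximation:
   pHH: acceptance prob. of a high doctor's application to a high hospital;
   pHL: same for a high doctor at a low hospital;
   pLH: low doctor at a high hospital (rejected if the hospital is taken by
        a high doctor, prob. 1 - e^{-lamHH}; otherwise competes with the
        other low applicants, on average r y per high hospital);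
   pLL: low doctor at a low hospital (free w.p. e^{-lamHL}; on average 1-y
        low applicants per low hospital). *)
Definition fixed_point (r : R) (K : nat) (x : nat -> R) (y pHH pHL pLH pLL : R)
  : Prop :=
  0 <= pHH <= 1 /\ 0 <= pHL <= 1 /\ 0 <= pLH <= 1 /\ 0 <= pLL <= 1 /\
  pHH = phi (lamHH K x pHH) /\
  pHL = phi (lamHL r K x pHH pHL) /\
  pLH = exp (- lamHH K x pHH) * phi (r * y) /\
  pLL = exp (- lamHL r K x pHH pHL) * phi (1 - y).

(* expected value of a high doctor using (k, K-k) *)
Definition UH (v : R) (K : nat) (pHH pHL : R) (k : nat) : R :=
  v * (1 - (1 - pHH) ^ k) + (1 - pHH) ^ k * (1 - (1 - pHL) ^ (K - k)).

Definition UL_high (v pLH : R) : R := v * pLH.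
Definition UL_low (pLL : R) : R := pLL.

Definition mixed (K : nat) (x : nat -> R) : Prop :=
  (forall k, (k <= K)%nat -> 0 <= x k) /\ sum_f_R0 x K = 1.

Definition sym_equilibrium (v r : R) (K : nat) (x : nat -> R)
  (y pHH pHL pLH pLL : R) : Prop :=
  mixed K x /\ 0 <= y <= 1 /\
  fixed_point r K x y pHH pHL pLH pLL /\
  (forall k, (k <= K)%nat -> 0 < x k ->
     forall k', (k' <= K)%nat -> UH v K pHH pHL k' <= UH v K pHH pHL k) /\
  (0 < y -> UL_low pLL <= UL_high v pLH) /\
  (y < 1 -> UL_high v pLH <= UL_low pLL).

(* social welfare (total over all agents, market size n):
   high-high match worth 2v, high doctor-low hospital v+1,
   low doctor-high hospital v+1, low-low 2. *)
Definition welfare (n v r : R) (K : nat) (x : nat -> R) (y pHH pHL pLH pLL : R)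
  : R :=
  n * ( 2 * v * sum_f_R0 (fun k => x k * (1 - (1 - pHH) ^ k)) K
      + (v + 1) * sum_f_R0 (fun k => x k * (1 - pHH) ^ k
                                   * (1 - (1 - pHL) ^ (K - k))) K
      + (v + 1) * (r * y * pLH)
      + 2 * (r * (1 - y) * pLL) ).

Definition welfare_SIMPLE (n v r : R) : R := 2 * (v + r) * n * (1 - 1 / exp 1).

(* Main.v *)
Require Import Defs.
From Stdlib Require Import Reals.
From Stdlib Require Import Lra Lia Psatz Factorial.
Open Scope R_scope.

Lemma exp_ge2 (x : R) : 0 <= x -> 1 + x + x^2/2 <= exp x.
Proof.
  intro Hx.
  assert (H := growing_ineq (E1 x) (exp x)).
  assert (Hg : Un_growing (E1 x)).
  { intro n. unfold E1. rewrite tech5.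
    assert (0 <= / INR (Factorial.fact (S n)) * x ^ S n).
    { apply Rmult_le_pos. left; apply Rinv_0_lt_compat, lt_0_INR, Factorial.lt_O_fact.
      apply pow_le; auto. }
    lra. }
  specialize (H Hg (E1_cvg x) 2%nat).
  unfold E1 in H. simpl in H. lra.
Qed.

Lemma pow_le_one (a : R) (k : nat) : 0 <= a <= 1 -> a ^ k <= 1.
Proof.
  intro H; induction k; simpl. lra.
  assert (0 <= a ^ k) by (apply pow_le; lra). nra.
Qed.

Lemma geom_mul (q : R) (k : nat) : (1 - q) * geom q k = 1 - q ^ k.
Proof.
  induction k as [|k IH]; simpl. ring.
  replace ((1 - q) * (1 + q * geom q k)) with (1 - q + q * ((1-q) * geom q k)) by ring.
  rewrite IH. ring.
Qed.

Lemma geom_nonneg (q : R) (k : nat) : 0 <= q -> 0 <= geom q k.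
Proof.
  intro Hq; induction k; simpl. lra.
  assert (0 <= q * geom q k) by (apply Rmult_le_pos; auto). lra.
Qed.

Lemma sum_nonneg (f : nat -> R) (N : nat) :
  (forall k, (k <= N)%nat -> 0 <= f k) -> 0 <= sum_f_R0 f N.
Proof.
  induction N; intro H; simpl. apply H; lia.
  assert (0 <= sum_f_R0 f N) by (apply IHN; intros; apply H; lia).
  assert (0 <= f (S N)) by (apply H; lia). lra.
Qed.

Lemma geom_sum_ge (q : R) (x : nat -> R) (K : nat) : 0 <= q ->
  (forall k, (k <= K)%nat -> 0 <= x k) -> forall N, (N <= K)%nat ->
  sum_f_R0 x N - x 0%nat <= sum_f_R0 (fun k => x k * geom q k) N.
Proof.
  intros Hq Hx N; induction N; intro HN; simpl. lra.
  assert (IH := IHN ltac:(lia)).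
  assert (0 <= x (S N)) by (apply Hx; lia).
  assert (0 <= q * geom q N) by (apply Rmult_le_pos; auto using geom_nonneg).
  assert (x (S N) <= x (S N) * (1 + q * geom q N)) by nra. lra.
Qed.

Lemma phi_mul (l : R) : l * phi l = 1 - exp (- l).
Proof.
  unfold phi. destruct (Req_EM_T l 0) as [->|Hl].
  rewrite Ropp_0, exp_0. ring. field. auto.
Qed.

Lemma phi_key (t : R) : 0 <= t -> t * phi t + phi t >= 1.
Proof.
  intro Ht. unfold phi. destruct (Req_EM_T t 0) as [->|Hl]. lra.
  rewrite exp_Ropp.
  assert (HE := exp_ineq1_le t). assert (HE0 := exp_pos t).
  set (E := exp t) in *.
  assert (Ht' : 0 < t) by lra.
  replace (t * ((1 - / E) / t) + (1 - / E) / t) with ((E - 1) * (t + 1) / (E * t)) by (field; lra).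
  apply Rle_ge. apply (Rmult_le_reg_r (E * t)). nra.
  unfold Rdiv. rewrite Rmult_assoc, Rinv_l by nra. nra.
Qed.

Theorem lemma4 (n v r : R) (K : nat) (x : nat -> R) (y pHH pHL pLH pLL : R) :
  0 < n -> 0 < r -> (1 <= K)%nat ->
  exp 1 / (exp 1 - 1) <= v ->
  sym_equilibrium v r K x y pHH pHL pLH pLL ->
  exp 1 / (2 * (exp 1 - 1)) * welfare_SIMPLE n v r
    <= welfare n v r K x y pHH pHL pLH pLL.
Proof.
  intros Hn Hr HK Hv [[Hx0 Hx1] [Hy [Hfp [HeqH [HeqL1 HeqL2]]]]].
  destruct Hfp as [HpHH [HpHL [HpLH [HpLL [EpHH [EpHL [EpLH EpLL]]]]]]].
  assert (He1 : 2 <= exp 1) by (assert (H := exp_ineq1_le 1); lra).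
  assert (He3 := exp_le_3).
  assert (Hv32 : 3/2 <= v).
  { apply Rle_trans with (exp 1 / (exp 1 - 1)); auto.
    apply (Rmult_le_reg_r (exp 1 - 1)). lra.
    replace (exp 1 / (exp 1 - 1) * (exp 1 - 1)) with (exp 1) by (field; lra). lra. }
  assert (HA : sum_f_R0 (fun k => x k * (1 - (1 - pHH) ^ k)) K = 1 - exp (- (lamHH K x pHH))).
  { rewrite <- phi_mul, <- EpHH. unfold lamHH. rewrite Rmult_comm, scal_sum.
    apply sum_eq; intros i _. rewrite <- geom_mul. ring. }
  assert (HB : sum_f_R0 (fun k => x k * (1 - pHH) ^ k * (1 - (1 - pHL) ^ (K - k))) K
               = r * (1 - exp (- (lamHL r K x pHH pHL)))).
  { rewrite <- phi_mul, <- EpHL. unfold lamHL.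
    replace (r * (/ r * sum_f_R0 (fun k : nat => x k * (1 - pHH) ^ k * geom (1 - pHL) (K - k)) K * pHL))
      with (pHL * sum_f_R0 (fun k : nat => x k * (1 - pHH) ^ k * geom (1 - pHL) (K - k)) K)
      by (field; lra).
    rewrite scal_sum. apply sum_eq; intros i _. rewrite <- geom_mul. ring. }
  assert (Hmu : 0 <= (lamHL r K x pHH pHL)).
  { unfold lamHL. apply Rmult_le_pos. left; apply Rinv_0_lt_compat; auto.
    apply sum_nonneg; intros k Hk. repeat apply Rmult_le_pos; auto.
    apply pow_le; lra. apply geom_nonneg; lra. }
  assert (Hlam : 0 <= (lamHH K x pHH)).
  { unfold lamHH. apply sum_nonneg; intros k Hk. apply Rmult_le_pos; auto.
    apply geom_nonneg;  lra. }
  assert (Ha : exp (- (lamHH K x pHH)) <= 1/2).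
  { rewrite exp_Ropp. assert (HE0 := exp_pos (lamHH K x pHH)).
    assert (HE1 := exp_ineq1_le (lamHH K x pHH)). assert (HE2 := exp_ge2 (lamHH K x pHH) Hlam).
    set (E := exp (lamHH K x pHH)) in *.
    assert (HE : 2 <= E -> / E <= 1/2).
    { intro. apply (Rmult_le_reg_r E); auto. rewrite Rinv_l by lra. lra. }
    destruct (Rle_lt_dec 2 E) as [H2|H2]; [auto|exfalso].
    destruct (Rle_lt_or_eq_dec 0 (x 0%nat)) as [Hx00|Hx00]; [apply Hx0; lia| |].
    -
      assert (HU := HeqH 0%nat ltac:(lia) Hx00 K ltac:(lia)).
      unfold UH in HU. rewrite Nat.sub_diag, Nat.sub_0_r in HU. simpl pow in HU.
      assert (Hs : 0 <= (1 - pHL) ^ K) by (apply pow_le; lra).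
      assert (HqK : (1 - pHH) ^ K <= 1 - pHH).
      { destruct K as [|K']; [lia|]. simpl. 
        assert (0 <= (1-pHH)^K' <= 1) by (split; [apply pow_le; lra | apply pow_le_one; lra]).
        nra. }
      assert (Hvp : v * pHH <= 1) by nra.
      assert (Hp : pHH <= 2/3).
      { apply (Rmult_le_reg_l v). lra. nra. }
      assert (Hl : (lamHH K x pHH) * pHH = 1 - / E).
      { rewrite EpHH at 2. rewrite phi_mul, exp_Ropp. reflexivity. }
      destruct (Req_dec (lamHH K x pHH) 0) as [H0|H0].
      + rewrite H0 in EpHH. unfold phi in EpHH. destruct (Req_EM_T 0 0); [|congruence]. lra.
      + assert (Hlp : 0 < (lamHH K x pHH)) by lra.
        assert (H3 : E - 1 <= 2 * (lamHH K x pHH) * E / 3).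
        { assert (1 - / E <= 2 * (lamHH K x pHH) / 3) by nra.
          assert (E * (1 - / E) = E - 1) by (field; lra). nra. }
        assert (Hl23 : (lamHH K x pHH) < 2/3) by nra.
        nra.
    -
      assert (Hg := geom_sum_ge (1 - pHH) x K ltac:( lra) Hx0 K (le_n K)).
      change (sum_f_R0 (fun k => x k * geom (1 - pHH) k) K) with (lamHH K x pHH) in Hg.
      lra. }
  assert (Hlow : y * (v * pLH - pLL) >= 0).
  { destruct (Rle_lt_or_eq_dec 0 y) as [Hy0|Hy0]; [lra| |].
    - assert (H := HeqL1 Hy0). unfold UL_low, UL_high in H. nra.
    - rewrite <- Hy0. lra. }
  assert (HpLL' : pLL * (1 - y) + pLL >= exp (- (lamHL r K x pHH pHL))).
  { rewrite EpLL. assert (H := phi_key (1 - y) ltac:(lra)).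
    assert (0 < exp (- (lamHL r K x pHH pHL))) by apply exp_pos. nra. }
  assert (Hb : exp (- (lamHL r K x pHH pHL)) <= 1).
  { rewrite exp_Ropp. assert (HE1 := exp_ineq1_le (lamHL r K x pHH pHL)). apply (Rmult_le_reg_r (exp (lamHL r K x pHH pHL))).
    apply exp_pos. rewrite Rinv_l by (apply exp_neq_0). lra. }
  assert (Htarget : exp 1 / (2 * (exp 1 - 1)) * welfare_SIMPLE n v r = n * (v + r)).
  { unfold welfare_SIMPLE. field. lra. }
  rewrite Htarget. unfold welfare. rewrite HA, HB.
  apply Rmult_le_compat_l. lra.
  assert (0 <= r * y * pLH) by (apply Rmult_le_pos; [apply Rmult_le_pos|]; lra).
  assert (0 <= v * (r * (1 - exp (- (lamHL r K x pHH pHL))))) by (apply Rmult_le_pos; [|apply Rmult_le_pos]; lra).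
  assert (2 * v * (1 - exp (- (lamHH K x pHH))) >= v) by nra.
  assert (r * (y * (v * pLH - pLL)) >= 0) by nra.
  assert (r * (pLL * (1 - y) + pLL) >= r * exp (- (lamHL r K x pHH pHL))) by nra.
  nra.
Qed.
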